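(* Let $G$ be a group and $\mathcal{S}$ a 2-complex with vertices in $G$ such that $\mathcal{C}=Sc[\mathcal{S},G]$ is a commutative triplet structure. Then for every $g\in G$ the link of $g$ in $\mathcal{C}$ is isomorphic to the graph $G_{link}$ with vertex set $\{xy^{-1}:\{x,y\}\in\mathcal{T}\}$ in which $ac^{-1}\sim bc^{-1}$ for every triangle $\{a,b,c\}$ of $\mathcal{S}$ (for every labelling of its vertices).
   Context: For $\sigma\subseteq G$, $\sigma\cdot g=\{sg:s\in\sigma\}$; $Sc[\mathcal{S},G]=\{\sigma\cdot g:\sigma\in\mathcal{S},g\in G\}$. The link of a vertex $v$ of $\mathcal{C}$ is the graph with edge set $\{\sigma\setminus\{v\}:\sigma \text{ a triangle of }\mathcal{C},\ v\in\sigma\}$. $\mathcal{T}=\mathcal{S}(1)$ (2-sets contained in triangles of $\mathcal{S}$), $\mathcal{T}_o$ = ordered pairs $(t_1,t_2)$ with $\{t_1,t_2\}\in\mathcal{T}$. Commutative triplet structure: (0) $\{s,s^{-1}\}\notin\mathcal{T}$ for every vertex $s$; (A) every edge of $\mathcal{T}$ lies in exactly $\tilde d$ triangles of $\mathcal{S}$; (B) $ab=ba$ for $\{a,b\}\in\mathcal{T}$; (C) $\{a,b\}\in\mathcal{T}\iff\{a^{-1},b^{-1}\}\in\mathcal{T}$; (D) for $t\ne t'\in\mathcal{T}_o$, $t_1t_2^{-1}=t'_1(t'_2)^{-1}$ implies $t'_2=t_1^{-1}$, $t'_1=t_2^{-1}$; (E) the 1-skeleton of $\mathcal{S}$ is connected.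 *)

(* Defs.v *)
(* An abstract (possibly infinite) group is given by its
   carrier type, operations and the group axioms; sets are predicates. *)
From Stdlib Require Import List Relations.
Set Implicit Arguments.

Section Defs.
Variable T : Type.
Variables (mul : T -> T -> T) (one : T) (inv : T -> T).

Record is_group : Prop := {
  mulA : forall x y z, mul x (mul y z) = mul (mul x y) z;
  mul1g : forall x, mul one x = x;
  mulg1 : forall x, mul x one = x;
  mulVg : forall x, mul (inv x) x = one;
  mulgV : forall x, mul x (inv x) = one }.

Definition family := (T -> Prop) -> Prop.

Definition is3set (sigma : T -> Prop) (a b c : T) : Prop :=
  a <> b /\ a <> c /\ b <> c /\ forall x, sigma x <-> (x = a \/ x = b \/ x = c).

(* every member of S is a triangle (3-element set): S is a 2-complex
   given by its triangles *)
Definition two_complex (S : family) : Prop :=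
  forall sigma, S sigma -> exists a b c, is3set sigma a b c.

(* {a,b,c} is a triangle of F (any labelling, sets up to extensionality) *)
Definition is_tri (F : family) (a b c : T) : Prop :=
  exists sigma, F sigma /\ is3set sigma a b c.

Definition rtrans (sigma : T -> Prop) (g : T) : T -> Prop :=
  fun x => exists s, sigma s /\ x = mul s g.

Definition Sc (S : family) : family :=
  fun tau => exists sigma g, S sigma /\ forall x, tau x <-> rtrans sigma g x.

(* {a,b} in T = S(1): 2-sets contained in triangles of S *)
Definition edgeT (S : family) (a b : T) : Prop :=
  a <> b /\ exists c, is_tri S a b c.

Definition vertS (S : family) (v : T) : Prop := exists sigma, S sigma /\ sigma v.

Definition comm_triplet_structure (S : family) : Prop :=
  (forall s, ~ edgeT S s (inv s)) /\
  (exists dt : nat, forall a b, edgeT S a b ->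
               exists l : list T, NoDup l /\ length l = dt /\
                 forall c, In c l <-> is_tri S a b c) /\
  (forall a b, edgeT S a b -> mul a b = mul b a) /\
  (forall a b, edgeT S a b <-> edgeT S (inv a) (inv b)) /\
  (forall t1 t2 t1' t2', edgeT S t1 t2 -> edgeT S t1' t2' ->
               (t1, t2) <> (t1', t2') ->
               mul t1 (inv t2) = mul t1' (inv t2') ->
               t2' = inv t1 /\ t1' = inv t2) /\
  (forall u v, vertS S u -> vertS S v -> clos_refl_trans T (edgeT S) u v).

(* link of g in a complex C: edges sigma \ {g} for triangles sigma containing g;
   vertices = endpoints of these edges *)
Definition link_edge (C : family) (g x y : T) : Prop := is_tri C g x y.
Definition link_vert (C : family) (g x : T) : Prop := exists y, link_edge C g x y.

Definition Glink_vert (S : family) (v : T) : Prop :=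
  exists x y, edgeT S x y /\ v = mul x (inv y).
Definition Glink_edge (S : family) (u v : T) : Prop :=
  exists a b c, is_tri S a b c /\ u = mul a (inv c) /\ v = mul b (inv c).

End Defs.

Definition graph_iso {T1 T2 : Type} (V1 : T1 -> Prop) (E1 : T1 -> T1 -> Prop)
  (V2 : T2 -> Prop) (E2 : T2 -> T2 -> Prop) (f : T1 -> T2) : Prop :=
  (forall x, V1 x -> V2 (f x)) /\
  (forall x y, V1 x -> V1 y -> f x = f y -> x = y) /\
  (forall z, V2 z -> exists x, V1 x /\ f x = z) /\
  (forall x y, V1 x -> V1 y -> (E1 x y <-> E2 (f x) (f y))).

(* Main.v *)
Require Import Defs.
From Stdlib Require Import List Relations.
Set Implicit Arguments.

Section Aux.
Variable T : Type.
Variables (mul : T -> T -> T) (one : T) (inv : T -> T).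
Hypothesis HG : is_group mul one inv.

Lemma canR x h : mul (mul x (inv h)) h = x.
Proof. rewrite <- (mulA HG), (mulVg HG), (mulg1 HG). reflexivity. Qed.
Lemma canR' x h : mul (mul x h) (inv h) = x.
Proof. rewrite <- (mulA HG), (mulgV HG), (mulg1 HG). reflexivity. Qed.
Lemma injR x y h : mul x h = mul y h -> x = y.
Proof. intro E. rewrite <- (canR' x h), <- (canR' y h), E. reflexivity. Qed.

Lemma is3_swap12 (s : T -> Prop) a b c : is3set s a b c -> is3set s b a c.
Proof. intros [h1 [h2 [h3 h4]]]. split; [|split; [|split]]; auto.
intro x; rewrite h4; tauto. Qed.
Lemma is3_swap23 (s : T -> Prop) a b c : is3set s a b c -> is3set s a c b.
Proof. intros [h1 [h2 [h3 h4]]]. split; [|split; [|split]]; auto.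
intro x; rewrite h4; tauto. Qed.

Lemma tri_swap12 (F : family T) a b c : is_tri F a b c -> is_tri F b a c.
Proof. intros [s [H1 H2]]; exists s; split; auto; apply is3_swap12; auto. Qed.
Lemma tri_swap23 (F : family T) a b c : is_tri F a b c -> is_tri F a c b.
Proof. intros [s [H1 H2]]; exists s; split; auto; apply is3_swap23; auto. Qed.

Lemma L1 S g x y : is_tri (Sc mul S) g x y ->
  exists a b c, is_tri S a b c /\ x = mul (mul a (inv c)) g /\ y = mul (mul b (inv c)) g.
Proof.
intros [tau [[sigma [h [Hs Ht]]] [d1 [d2 [d3 H4]]]]].
destruct (proj1 (Ht g) (proj2 (H4 g) (or_introl eq_refl))) as [s [Hs0 E0]].
destruct (proj1 (Ht x) (proj2 (H4 x) (or_intror (or_introl eq_refl)))) as [s1 [Hs1 E1]].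
destruct (proj1 (Ht y) (proj2 (H4 y) (or_intror (or_intror eq_refl)))) as [s2 [Hs2 E2]].
exists s1, s2, s. split.
- exists sigma. split; auto.
  split; [|split; [|split]].
  + intro e; subst; congruence.
  + intro e; subst; congruence.
  + intro e; subst; congruence.
  + intro z; split.
    * intro Hz. assert (tau (mul z h)) as Tz by (apply Ht; exists z; auto).
      apply H4 in Tz. destruct Tz as [e|[e|e]].
      -- right; right. apply (@injR _ _ h). congruence.
      -- left. apply (@injR _ _ h). congruence.
      -- right; left. apply (@injR _ _ h). congruence.
    * intros [e|[e|e]]; subst; auto.
- assert (h = mul (inv s) g) as Eh.
  { subst g. rewrite (mulA HG), (mulVg HG), (mul1g HG). reflexivity. }
  rewrite <- !(mulA HG), <- Eh. auto.
Qed.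

Lemma L2 S g a b c : is_tri S a b c ->
  is_tri (Sc mul S) g (mul (mul a (inv c)) g) (mul (mul b (inv c)) g).
Proof.
intros [sigma [Hs [d1 [d2 [d3 H4]]]]].
set (h := mul (inv c) g).
assert (Ea : mul a h = mul (mul a (inv c)) g) by (unfold h; apply (mulA HG)).
assert (Eb : mul b h = mul (mul b (inv c)) g) by (unfold h; apply (mulA HG)).
assert (Ec : mul c h = g) by (unfold h; rewrite (mulA HG), (mulgV HG), (mul1g HG); auto).
exists (rtrans mul sigma h). split.
- exists sigma, h. split; auto. intro; tauto.
- split; [|split; [|split]].
  + intro e. rewrite <- Ea in e. rewrite <- Ec in e. apply d2. apply (@injR _ _ h). congruence.
  + intro e. rewrite <- Eb in e. rewrite <- Ec in e. apply d3. apply (@injR _ _ h). congruence.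
  + intro e. rewrite <- Ea, <- Eb in e. apply d1. apply (@injR _ _ h). auto.
  + intro z; split.
    * intros [s [Hs' E]]. apply H4 in Hs'. rewrite E; destruct Hs' as [e|[e|e]]; rewrite e; auto.
    * intros [e|[e|e]]; rewrite e.
      -- exists c; split; auto. apply H4; auto.
      -- exists a; split; auto. apply H4; auto.
      -- exists b; split; auto. apply H4; auto.
Qed.
End Aux.

Theorem mainTheorem8 (T : Type) (mul : T -> T -> T) (one : T) (inv : T -> T)
  (HG : is_group mul one inv) (S : family T)
  (HS : two_complex S)
  (Hcts : comm_triplet_structure mul inv S) :
  forall g : T, exists f : T -> T,
    graph_iso (link_vert (Sc mul S) g) (link_edge (Sc mul S) g)
              (Glink_vert mul inv S) (Glink_edge mul inv S) f.
Proof.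
intro g. exists (fun x => mul x (inv g)).
split; [|split; [|split]].
- intros x [y Hy]. destruct (L1 HG Hy) as [a [b [c [Ht [Ex Ey]]]]].
  exists a, c. split.
  + split.
    * intro e; subst. destruct Ht as [s [_ [_ [d _]]]]. apply d; reflexivity.
    * exists b. apply tri_swap23; auto.
  + subst x. rewrite (canR' HG). reflexivity.
- intros x y _ _ E. apply (injR HG _ _ _ E).
- intros z [x [y [[dxy [c Hc]] Ez]]].
  exists (mul z g). split.
  + exists (mul (mul c (inv y)) g). unfold link_edge. subst z.
    apply (L2 HG). apply tri_swap23; auto.
  + apply (canR' HG).
- intros x y _ _. unfold link_edge, Glink_edge. split.
  + intro H. destruct (L1 HG H) as [a [b [c [Ht [Ex Ey]]]]].
    exists a, b, c. subst. rewrite !(canR' HG). auto.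
  + intros [a [b [c [Ht [Ex Ey]]]]].
    rewrite <- (canR HG x g), <- (canR HG y g), Ex, Ey. apply (L2 HG); auto.
Qed.
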